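(* Let $G$ be a reaction network with one-dimensional stoichiometric subspace. If for a rate-constant vector $\kappa^*$ and a total-constant vector $c^*$, $G$ has exactly $N$ positive steady states $x^{(1)},\dots,x^{(N)}$ in $\mathcal P_{c^*}$ with $x^{(1)}_1<\dots<x^{(N)}_1$, then (a) for any $1\le i\le N-1$, $x^{(i)}$ and $x^{(i+1)}$ are not both stable, and (b) at most $\lceil N/2\rceil$ of these positive steady states are stable.
   Context: A reaction network $G$ has species $X_1,\dots,X_s$ and $m$ reactions $\sum_{i}\alpha_{ij}X_i\to\sum_i\beta_{ij}X_i$, $\alpha_{ij},\beta_{ij}\in\mathbb Z_{\ge0}$, $(\alpha_{1j},\dots,\alpha_{sj})\neq(\beta_{1j},\dots,\beta_{sj})$. $\mathcal N$ has entries $\beta_{ij}-\alpha_{ij}$, $S=\mathrm{im}\,\mathcal N$. For $\kappa\in\mathbb R^m_{>0}$, $f(\kappa;x)=\mathcal N(\kappa_1\prod_i x_i^{\alpha_{i1}},\dots,\kappa_m\prod_i x_i^{\alpha_{im}})^\top$. Since $S$ is one-dimensional, species are labelled so that $\beta_{11}-\alpha_{11}\ne0$, and for $c\in\mathbb R^{s-1}$, $\mathcal P_c=\{x\in\mathbb R^s_{\ge0}:(\beta_{i1}-\alpha_{i1})x_1-(\beta_{11}-\alpha_{11})x_i=c_{i-1},\ i=2,\dots,s\}$. A steady state is $x\ge0$ with $f(\kappa;x)=0$; positive if $x\in\mathbb R^s_{>0}$; nondegenerate if $\mathrm{Jac}_f(x)(S)=S$; stable if nondegenerate and all nonzero eigenvalues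 of $\mathrm{Jac}_f(x)$ have negative real parts. *)

(* Defs.v *)
From HB Require Import structures.
From mathcomp Require Import all_boot all_order all_algebra.
From mathcomp Require Import mpoly.
From mathcomp Require Import complex.
From Stdlib Require Import Rdefinitions.
From mathcomp Require Import Rstruct.

Set Implicit Arguments.
Unset Strict Implicit.
Unset Printing Implicit Defensive.

Import Order.TTheory GRing.Theory Num.Theory.
Local Open Scope ring_scope.

Notation Real := Rdefinitions.R.

(* Species are indexed by 'I_s, reactions by 'I_m.  Reaction j is
   sum_i alpha i j X_i -> sum_i beta i j X_i. *)

Definition valid_network (s m : nat) (alpha beta : 'M[nat]_(s, m)) : Prop :=
  forall j : 'I_m, exists i : 'I_s, alpha i j != beta i j.

Definition stoich (s m : nat) (alpha beta : 'M[nat]_(s, m)) : 'M[Real]_(s, m) :=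
  \matrix_(i, j) ((beta i j)%:R - (alpha i j)%:R).

Definition one_dim_S (s m : nat) (alpha beta : 'M[nat]_(s, m)) : Prop :=
  \rank (stoich alpha beta) = 1%N.

Definition monom (s : nat) (a : 'I_s -> nat) : {mpoly Real[s]} :=
  \prod_(k < s) 'X_k ^+ a k.

Definition fpoly (s m : nat) (alpha beta : 'M[nat]_(s, m)) (kappa : 'I_m -> Real)
    (i : 'I_s) : {mpoly Real[s]} :=
  \sum_(j < m) (stoich alpha beta i j * kappa j) *: monom (fun k => alpha k j).

Definition fvec (s m : nat) (alpha beta : 'M[nat]_(s, m)) (kappa : 'I_m -> Real)
    (x : 'I_s -> Real) : 'I_s -> Real :=
  fun i => (fpoly alpha beta kappa i).@[x].

Definition jac (s m : nat) (alpha beta : 'M[nat]_(s, m)) (kappa : 'I_m -> Real)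
    (x : 'I_s -> Real) : 'M[Real]_s :=
  \matrix_(i, k) (mderiv k (fpoly alpha beta kappa i)).@[x].

Definition steady_state (s m : nat) (alpha beta : 'M[nat]_(s, m))
    (kappa : 'I_m -> Real) (x : 'I_s -> Real) : Prop :=
  (forall i, 0 <= x i) /\ (forall i, fvec alpha beta kappa x i = 0).

Definition positive_vec (s : nat) (x : 'I_s -> Real) : Prop :=
  forall i, 0 < x i.

(* Nondegenerate: Jac_f(x)(S) = S, i.e. the column space of Jac*N equals
   the column space of N (stated through row spaces of the transposes). *)
Definition nondegenerate (s m : nat) (alpha beta : 'M[nat]_(s, m))
    (kappa : 'I_m -> Real) (x : 'I_s -> Real) : Prop :=
  (((jac alpha beta kappa x *m stoich alpha beta)^T == (stoich alpha beta)^T)%MS).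

Definition stable (s m : nat) (alpha beta : 'M[nat]_(s, m))
    (kappa : 'I_m -> Real) (x : 'I_s -> Real) : Prop :=
  nondegenerate alpha beta kappa x /\
  forall lam : Real[i],
    eigenvalue (map_mx (fun r : Real => real_complex Real r) (jac alpha beta kappa x)) lam ->
    lam != 0 -> complex.Re lam < 0.

(* Stoichiometric compatibility class P_c, with s.+1 species (X_1 = ord0)
   and c in R^s:  (b_{i1}-a_{i1}) x_1 - (b_{11}-a_{11}) x_i = c_{i-1},
   i = 2..s+1, together with x >= 0. *)
Definition compat_class (s m : nat) (alpha beta : 'M[nat]_(s.+1, m.+1))
    (c : 'I_s -> Real) (x : 'I_s.+1 -> Real) : Prop :=
  (forall i, 0 <= x i) /\
  forall i : 'I_s,
    stoich alpha beta (lift ord0 i) ord0 * x ord0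
    - stoich alpha beta ord0 ord0 * x (lift ord0 i) = c i.

(* Main.v *)
Require Import Defs.
From HB Require Import structures.
From mathcomp Require Import all_boot all_order all_algebra.
From mathcomp Require Import mpoly complex.
From Stdlib Require Import Rdefinitions FunctionalExtensionality.
From mathcomp Require Import Rstruct.
From mathcomp Require Import ring lra zify.
Import Order.TTheory GRing.Theory Num.Theory.
Local Open Scope ring_scope.
Set Implicit Arguments.
Unset Strict Implicit.
From mathcomp Require Import polyrcf.
Lemma mpoly_ind2 (n : nat) (R : comNzRingType) (P : {mpoly R[n]} -> Prop) :
  (forall c, P c%:MP) -> (forall i, P 'X_i) ->
  (forall p q, P p -> P q -> P (p + q)) -> (forall p q, P p -> P q -> P (p * q)) ->
  forall p, P p.
Proof.
move=> HC HX HD HM p; rewrite [p]mpolyE.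
apply: (big_ind P); [by rewrite -mpolyC0 | exact: HD|].
move=> m _; rewrite -mul_mpolyC; apply: (HM) => //.
rewrite mpolyXE_id; apply: (big_ind P); [by rewrite -mpolyC1 | exact: HM|].
move=> i _; elim: (m i) => [|k IH]; first by rewrite expr0 -mpolyC1.
by rewrite exprS; apply: (HM).
Qed.

Lemma mderivXU (n : nat) (R : comNzRingType) (i k : 'I_n) :
  mderiv k ('X_i : {mpoly R[n]}) = (i == k)%:R%:MP.
Proof.
rewrite mderivX mnm1E; case: eqP => [->|_]; last by rewrite scale0r mpolyC0.
have ->: (U_(k) - U_(k) = 0)%MM by apply/mnmP => j; rewrite mnmBE mnm0E subnn.
by rewrite mpolyX0 scale1r mpolyC1.
Qed.

Section Line.
Variables (n : nat) (x u : 'I_n -> Real).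
Definition hl (k : 'I_n) : {poly Real} := (x k)%:P + u k *: 'X.
Definition Phi (p : {mpoly Real[n]}) : {poly Real} := mmap (@polyC Real) hl p.
Definition zl (t : Real) (k : 'I_n) := x k + u k * t.

Lemma Phi_eval p t : (Phi p).[t] = p.@[zl t].
Proof.
elim/mpoly_ind2: p => [c|i|p q Hp Hq|p q Hp Hq].
- by rewrite /Phi mmapC mevalC hornerC.
- by rewrite /Phi mmapX mmap1U mevalXU /hl /zl hornerD hornerC hornerZ hornerX.
- by rewrite /Phi mmapD hornerD -!/(Phi _) Hp Hq mevalD.
- by rewrite /Phi rmorphM hornerM -!/(Phi _) Hp Hq mevalM.
Qed.

Lemma Phi_deriv p : deriv (Phi p) = \sum_k u k *: Phi (mderiv k p).
Proof.
elim/mpoly_ind2: p => [c|i|p q Hp Hq|p q Hp Hq].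
- rewrite /Phi mmapC derivC; apply/esym/big1 => k _.
  by rewrite mderivC mmap0 scaler0.
- rewrite /Phi mmapX mmap1U /hl derivD derivC add0r derivZ derivX.
  rewrite (bigD1 i) //= big1 ?addr0; last first.
    by move=> k /negbTE ne; rewrite mderivXU (eq_sym i) ne mpolyC0 mmap0 scaler0.
  by rewrite mderivXU eqxx mpolyC1 rmorph1 alg_polyC.
- rewrite /Phi mmapD derivD -!/(Phi _) Hp Hq -big_split /=; apply: eq_bigr => k _.
  by rewrite mderivD /Phi mmapD scalerDr.
- rewrite /Phi rmorphM derivM -!/(Phi _) Hp Hq mulr_suml mulr_sumr -big_split /=.
  apply: eq_bigr => k _.
  by rewrite mderivM /Phi rmorphD !rmorphM -!/(Phi _) scalerDr scalerAl scalerAr.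
Qed.

Lemma Phi_deriv_eval p t :
  (deriv (Phi p)).[t] = \sum_k u k * (mderiv k p).@[zl t].
Proof.
rewrite Phi_deriv horner_sum; apply: eq_bigr => k _.
by rewrite hornerZ Phi_eval.
Qed.
End Line.
Lemma poly_root (p : {poly Real}) (T : Real) : 0 < T -> p.[0] = 0 -> p.[T] = 0 ->
  (deriv p).[0] < 0 -> (deriv p).[T] < 0 -> exists t, 0 < t /\ t < T /\ p.[t] = 0.
Proof.
move=> T0 p0 pT d0 dT.
have /factor_theorem [q Eq] : root p 0 by apply/rootP.
have qT : q.[T] = 0.
  move: pT; rewrite Eq hornerM hornerD hornerN hornerX hornerC subr0 => /eqP.
  by rewrite mulf_eq0 (gt_eqF T0) orbF => /eqP.
have /factor_theorem [r Er] : root q T by apply/rootP.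
have d0' : r.[0] * (0 - T) < 0.
  by move: d0; rewrite Eq Er !derivM !derivD derivX !derivN !derivC !(subr0, addr0) !hornerE.
have dT' : r.[T] * T < 0.
  by move: dT; rewrite Eq Er !derivM !derivD derivX !derivN !derivC !(subr0, addr0) !hornerE subrr; lra.
have r0 : 0 < r.[0] by nra.
have rT : r.[T] < 0 by nra.
have [t] := @poly_ivtoo _ r 0 T (ltW T0) ltac:(nra).
rewrite in_itv /= => /andP [t0 tT] /rootP rt.
by exists t; split => //; split => //; rewrite Eq Er !hornerM rt !mul0r.
Qed.
Lemma col_prop (s m : nat) (A : 'M[Real]_(s.+1, m.+1)) :
  \rank A = 1%N -> A ord0 ord0 != 0 ->
  forall i j, A i j * A ord0 ord0 = A i ord0 * A ord0 j.
Proof.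
move=> rA nz i j.
set B := A^T.
have rB : \rank B = 1%N by rewrite mxrank_tr.
have nzr : row ord0 B != 0.
  apply/negP => /eqP/matrixP/(_ ord0 ord0); rewrite !mxE => E.
  by move: nz; rewrite E eqxx.
have sub0 : (row ord0 B <= B)%MS by apply: row_sub.
have := (mxrank_leqif_sup sub0).2; rewrite rank_rV nzr rB eqxx => /esym SB.
have : (row j B <= row ord0 B)%MS by apply: submx_trans (row_sub j B) SB.
case/sub_rVP => a Ea.
have E1 k : A k j = a * A k ord0.
  by have := congr1 (fun M : 'rV[Real]_s.+1 => M ord0 k) Ea; rewrite !mxE.
by rewrite !E1 mulrCA mulrA.
Qed.

Section Net.
Variables (s m : nat) (alpha beta : 'M[nat]_(s.+1, m.+1)) (kappa : 'I_m.+1 -> Real).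
Hypothesis Hdim : one_dim_S alpha beta.
Hypothesis Hlab : stoich alpha beta ord0 ord0 != 0.

Let Nm := stoich alpha beta.
Definition uu (i : 'I_s.+1) := stoich alpha beta i ord0 / stoich alpha beta ord0 ord0.
Definition HH := fpoly alpha beta kappa ord0.
Definition gg (x : 'I_s.+1 -> Real) (k : 'I_s.+1) := (mderiv k HH).@[x].

Lemma uu0 : uu ord0 = 1.
Proof. by rewrite /uu divff. Qed.

Lemma Nprop i j : stoich alpha beta i j = uu i * stoich alpha beta ord0 j.
Proof.
apply: (mulIf Hlab); rewrite col_prop //; rewrite /uu.
by rewrite mulrAC divfK.
Qed.

Lemma fpoly_prop i : fpoly alpha beta kappa i = uu i *: HH.
Proof.
rewrite /HH /fpoly scaler_sumr; apply: eq_bigr => j _.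
by rewrite scalerA (Nprop i j) mulrA.
Qed.

Lemma fvec_prop x i : fvec alpha beta kappa x i = uu i * HH.@[x].
Proof. by rewrite /fvec fpoly_prop mevalZ. Qed.

Lemma jac_prop x i k : jac alpha beta kappa x i k = uu i * gg x k.
Proof. by rewrite /jac mxE fpoly_prop mderivZ mevalZ. Qed.

Lemma stable_neg x : stable alpha beta kappa x -> \sum_k gg x k * uu k < 0.
Proof.
case=> Hnd Heig; set a := \sum_k gg x k * uu k.
have [a0|anz] := eqVneq a 0.
  exfalso.
  have J0 : jac alpha beta kappa x *m stoich alpha beta = 0.
    apply/matrixP => i j; rewrite !mxE.
    transitivity (uu i * stoich alpha beta ord0 j * a); last by rewrite a0 mulr0.
    rewrite /a mulr_sumr; apply: eq_bigr => k _.
    rewrite jac_prop (Nprop k j); ring.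
  move: Hnd; rewrite /Defs.nondegenerate J0 trmx0 => /andP [_].
  move/mxrankS; rewrite mxrank0 mxrank_tr.
  by move: Hdim; rewrite /one_dim_S => ->.
set w : 'rV[Real[i]]_s.+1 := \row_k real_complex Real (gg x k).
have Hw : w *m map_mx (fun r : Real => real_complex Real r) (jac alpha beta kappa x)
          = (real_complex Real a) *: w.
  have Jm : forall i k, map_mx (fun r : Real => real_complex Real r) (jac alpha beta kappa x) i k
     = real_complex Real (uu i * gg x k).
    by move=> i0 k; rewrite mxE jac_prop.
  apply/matrixP => i j; rewrite mxE.
  under eq_bigr do rewrite Jm mxE -rmorphM.
  rewrite -rmorph_sum !mxE -rmorphM; congr (real_complex Real _).
  rewrite /a mulr_suml; apply: eq_bigr => k _; ring.
have wnz : w != 0.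
  apply/negP => /eqP/matrixP W; move/eqP: anz; apply.
  rewrite /a big1 // => k _.
  have := W ord0 k; rewrite !mxE => /complexI ->; by rewrite mul0r.
have Hev : eigenvalue (map_mx (fun r : Real => real_complex Real r) (jac alpha beta kappa x)) (real_complex Real a).
  by apply/eigenvalueP; exists w.
have := Heig _ Hev.
by apply; apply/negP => /eqP/complexI/eqP; rewrite (negbTE anz).
Qed.
End Net.

Lemma half_inj (N : nat) (P : 'I_N -> Prop) :
  (forall k l : 'I_N, nat_of_ord l = (nat_of_ord k).+1 -> ~ (P k /\ P l)) ->
  forall A : {set 'I_N}, (forall k, k \in A -> P k) -> leq #|A| (uphalf N).
Proof.
move=> Hc A HA.
rewrite cardE -(size_map (fun k : 'I_N => half k)) -(size_iota 0 (uphalf N)).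
apply: uniq_leq_size.
  rewrite map_inj_in_uniq ?enum_uniq // => k l; rewrite !mem_enum => kA lA E.
  apply: ord_inj; apply/eqP; apply/negP => /negP ne; move: E ne.
  rewrite -!divn2 => E /eqP ne.
  have [kl|lk] : ((k : nat) = l.+1 \/ (l : nat) = k.+1) by lia.
  - by apply: (Hc l k kl); split; apply: HA.
  - by apply: (Hc k l lk); split; apply: HA.
move=> _ /mapP [k _ ->]; rewrite mem_iota add0n.
have := ltn_ord k; rewrite uphalfE -!divn2; lia.
Qed.

Theorem corollary5p6 (s m : nat) (alpha beta : 'M[nat]_(s.+1, m.+1))
  (Hvalid : valid_network alpha beta)
  (Hdim : one_dim_S alpha beta)
  (Hlab : stoich alpha beta ord0 ord0 != 0)
  (kappa : 'I_m.+1 -> Real) (Hkappa : forall j, 0 < kappa j)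
  (c : 'I_s -> Real)
  (N : nat) (xs : 'I_N -> 'I_s.+1 -> Real)
  (Hss : forall k, positive_vec (xs k) /\ steady_state alpha beta kappa (xs k)
                   /\ compat_class alpha beta c (xs k))
  (Hall : forall x, positive_vec x -> steady_state alpha beta kappa x ->
                    compat_class alpha beta c x -> exists k, x = xs k)
  (Hord : forall k l : 'I_N, ltn k l -> xs k ord0 < xs l ord0) :
  (forall k l : 'I_N, nat_of_ord l = (nat_of_ord k).+1 ->
     ~ (stable alpha beta kappa (xs k) /\ stable alpha beta kappa (xs l)))
  /\
  (forall A : {set 'I_N}, (forall k, k \in A -> stable alpha beta kappa (xs k)) ->
     leq #|A| (uphalf N)).
Proof.
have partA : forall k l : 'I_N, nat_of_ord l = (nat_of_ord k).+1 ->
     ~ (stable alpha beta kappa (xs k) /\ stable alpha beta kappa (xs l)).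
  move=> k l Ekl [Sk Sl].
  have [xpos [[_ xss] [_ xc]]] := Hss k.
  have [ypos [[_ yss] [_ yc]]] := Hss l.
  set x := xs k; set y := xs l.
  have kl : ltn k l by move: Ekl; rewrite /ltn /= => ->.
  have xy0 := Hord k l kl.
  set T := y ord0 - x ord0.
  have T0 : 0 < T by rewrite subr_gt0.
  set d := stoich alpha beta ord0 ord0.
  have yline : forall i, y i = zl x (uu alpha beta) T i.
    move=> i; rewrite /zl; case: (unliftP ord0 i) => [j ->|->]; last first.
      by rewrite uu0 // mul1r /T addrC subrK.
    have := xc j; have := yc j; rewrite /uu -/d => Ey Ex.
    apply: (mulfI Hlab); rewrite mulrDr.
    have -> : d * (stoich alpha beta (lift ord0 j) ord0 / d * T)
              = stoich alpha beta (lift ord0 j) ord0 * T.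
      by rewrite mulrCA mulrA divfK.
    move: Ey Ex; rewrite /T mulrBr -/d /x /y => Ey Ex; lra.
  have zero_at z : steady_state alpha beta kappa z -> (HH alpha beta kappa).@[z] = 0.
    case=> _ /(_ ord0); rewrite fvec_prop // uu0 // mul1r.
    by [].
  set phi := Phi x (uu alpha beta) (HH alpha beta kappa).
  have zl0 : zl x (uu alpha beta) 0 = x.
    by apply: functional_extensionality => i; rewrite /zl mulr0 addr0.
  have p0 : phi.[0] = 0 by rewrite Phi_eval zl0; apply: zero_at; exact: (Hss k).2.1.
  have pT : phi.[T] = 0.
    rewrite Phi_eval -(_ : y = zl x (uu alpha beta) T); last exact: functional_extensionality yline.
    apply: zero_at; exact: (Hss l).2.1.
  have dphi z : (deriv phi).[z] = \sum_k gg alpha beta kappa (zl x (uu alpha beta) z) k * uu alpha beta k.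
    by rewrite Phi_deriv_eval; apply: eq_bigr => i _; rewrite mulrC.
  have d0 : (deriv phi).[0] < 0 by rewrite dphi zl0; exact: (stable_neg Hdim Hlab Sk).
  have dT : (deriv phi).[T] < 0.
    rewrite dphi -(_ : y = zl x (uu alpha beta) T); last exact: functional_extensionality yline.
    exact: (stable_neg Hdim Hlab Sl).
  have [t [t0 [tT pt]]] := poly_root T0 p0 pT d0 dT.
  set z := zl x (uu alpha beta) t.
  have zpos : positive_vec z.
    move=> i; rewrite /z /zl.
    have xi : 0 < x i := xpos i; have yi : 0 < y i := ypos i; rewrite yline /zl in yi.
    have [ui|ui] := lerP 0 (uu alpha beta i); nra.
  have zss : steady_state alpha beta kappa z.
    split; first by move=> i; apply: ltW.
    by move=> i; rewrite fvec_prop // -Phi_eval pt mulr0.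
  have zc : compat_class alpha beta c z.
    split; first by move=> i; apply: ltW.
    move=> i; rewrite -xc /z /zl uu0 // /uu -/d mul1r.
    have -> : d * (x (lift ord0 i) + stoich alpha beta (lift ord0 i) ord0 / d * t)
              = d * x (lift ord0 i) + stoich alpha beta (lift ord0 i) ord0 * t.
      by rewrite mulrDr mulrCA mulrA divfK.
    rewrite mulrDr /x; lra.
  have [j Ej] := Hall z zpos zss zc.
  have zj : xs j ord0 = x ord0 + t by rewrite -Ej /z /zl uu0 // mul1r.
  have [jk|kj|jk] := ltngtP j k.
  - have := Hord j k jk; rewrite zj; move: t0; rewrite /x; lra.
  - have [jl|lj|jl] := ltngtP j l.
    + move: kj jl; rewrite Ekl; lia.
    + have := Hord l j lj; rewrite zj; move: tT; rewrite /T /x /y; lra.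
    + have E : j = l by apply: val_inj.
      move: zj tT; rewrite E /T /x /y; lra.
  - have E : j = k by apply: val_inj.
    move: zj t0; rewrite E /x; lra.
split => //.
exact: (half_inj partA).
Qed.
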